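(* Let $G$ be a finite connected graph with girth at least $5$ and $\gamma(G)>\delta(G)$, and let $H$ be the graph obtained from $G$ by subdividing every edge of $G$ exactly once. Then $\mathrm{cc}(H)\ge \delta(G)+1$.
   Context: All graphs are finite, connected and reflexive (a loop at every vertex; moving along a loop means passing); loops are ignored for girth, degrees and neighbourhoods. $\gamma$ denotes domination number and $\delta$ minimum degree. Cops and Attacking Robbers: the cop player places $k$ cops on vertices, then the robber chooses a vertex. In each round the cops move (each cop moves to an adjacent vertex or passes), then the robber moves (to an adjacent vertex or passes). The cops win if after finitely many moves a cop moves onto the robber's vertex. Additionally, if the robber moves onto a vertex occupied by a cop, exactly one cop on that vertex is removed from the game; the robber's initial placement on a cop's vertex does not count as an attack. Both players play optimally. The attacking cop number $\mathrm{cc}(G)$ is the least $k$ such that $k$ cops can guarantee a win. *)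

(* Defs.v *)
(* Simple graphs: symmetric irreflexive relation on a finType;
   the loops of the reflexive graph are modelled by allowing "stay" moves. *)
From mathcomp Require Import all_boot.
Set Implicit Arguments. Unset Strict Implicit. Unset Printing Implicit Defensive.

Section Graphs.
Variables (T : finType) (e : rel T).

Definition deg (x : T) : nat := #|[set y | e x y]|.
Definition mindeg : nat := \big[minn/#|T|]_(x : T) deg x.

Definition dominating (D : {set T}) : bool :=
  [forall x, (x \in D) || [exists y in D, e x y]].
Definition domnum : nat := \big[minn/#|T|]_(D : {set T} | dominating D) #|D|.

Definition girth_ge (g : nat) : Prop :=
  forall p : seq T, uniq p -> 3 <= size p -> cycle e p -> g <= size p.

Definition connected_graph : Prop := forall x y : T, connect e x y.

Definition is_edge (s : {set T}) : bool :=
  [exists x, exists y, e x y && (s == [set x; y])].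
Definition edgeT := {s : {set T} | is_edge s}.

Definition subdiv_vertex := (T + edgeT)%type.
Definition subdiv_rel : rel subdiv_vertex := fun u v =>
  match u, v with
  | inl x, inr s => x \in val s
  | inr s, inl x => x \in val s
  | _, _ => false
  end.
End Graphs.

Section Game.
Variables (V : finType) (adj : rel V).

Definition step (a b : V) : bool := (a == b) || adj a b.

(* cops_force c r : it is the cops' turn, the active cops occupy the
   positions listed in c (one entry per cop), the robber is on r, and the
   cops can force a capture in finitely many moves (least fixed point).
   A round: every cop makes a step (c -> c'); if some cop lands on r the
   cops win; otherwise the robber steps to r', and if r' is occupied by a
   cop exactly one cop there is removed (rem r' c'). *)
Inductive cops_force : seq V -> V -> Prop :=
| cops_force_step (c c' : seq V) (r : V) :
    all2 step c c' ->
    (r \in c' \/ (forall r' : V, step r r' -> cops_force (rem r' c') r')) ->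
    cops_force c r.

(* k cops can guarantee a win: some initial placement of k cops beats
   every initial robber vertex (initial placement is not an attack). *)
Definition cops_win (k : nat) : Prop :=
  exists c : seq V, size c = k /\ forall r : V, cops_force c r.
End Game.

(* Main.v *)
Require Import Defs.
From mathcomp Require Import all_boot.
From mathcomp Require Import zify.
Set Implicit Arguments. Unset Strict Implicit. Unset Printing Implicit Defensive.

Definition near1 (T : finType) (e : rel T) (v : T) (p : subdiv_vertex e) : bool :=
  match p with inl y => y == v | inr t => v \in val t end.
Definition blk (T : finType) (e : rel T) (u : T) (p : subdiv_vertex e) : bool :=
  match p with inl y => (y == u) || e u y | inr t => u \in val t end.

Lemma edge_cases (T : finType) (e : rel T) (e_sym : symmetric e) (t : {set T}) x y :
  is_edge e t -> x \in t -> y \in t -> x = y \/ e x y.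
Proof.
case/existsP => a /existsP [b /andP [eab /eqP ->]].
rewrite !inE => /orP[]/eqP-> /orP[]/eqP->; auto; right; by rewrite // e_sym.
Qed.

Lemma other_end (T : finType) (e : rel T) (e_sym : symmetric e) (t : {set T}) v :
  is_edge e t -> v \in t -> exists w, w \in t /\ e v w.
Proof.
case/existsP => a /existsP [b /andP [eab /eqP ->]].
rewrite !inE => /orP[]/eqP->.
- by exists b; rewrite !inE eqxx orbT.
- by exists a; rewrite !inE eqxx e_sym.
Qed.

Lemma all2_transfer (V : finType) (adj : rel V) (P Q : pred V) c c' :
  all2 (step adj) c c' -> (forall p p', step adj p p' -> P p -> Q p') ->
  all P c -> all Q c'.
Proof.
elim: c c' => [|p c IH] [|p' c'] //= /andP[hs h2] H /andP[hp hc].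
by rewrite (H _ _ hs hp) (IH _ h2 H hc).
Qed.

Lemma all2_size (V : finType) (adj : rel V) c c' :
  all2 (step adj) c c' -> size c' = size c.
Proof. by elim: c c' => [|p c IH] [|p' c'] //= /andP[_ /IH ->]. Qed.

Lemma T1 (T : finType) (e : rel T) v (p p' : subdiv_vertex e) :
  step (@subdiv_rel T e) p p' -> ~~ near1 v p -> p' != inl v.
Proof.
rewrite /step; case: p => [y|t]; case: p' => [x|s] /=; rewrite ?orbF //.
- by move=> /eqP[<-].
- by move=> xt; apply: contra => /eqP[<-].
Qed.

Lemma T2 (T : finType) (e : rel T) (e_sym : symmetric e) u (p p' : subdiv_vertex e) :
  step (@subdiv_rel T e) p p' -> ~~ blk u p -> ~~ near1 u p'.
Proof.
rewrite /step; case: p => [y|t]; case: p' => [x|s] /=; rewrite ?orbF //.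
- by move=> /eqP[<-]; rewrite negb_or => /andP[].
- rewrite negb_or => ys /andP[/negbTE yu /negbTE euy]; apply/negP => us.
  case: (edge_cases e_sym (valP s) ys us) => [yu'|eyu].
  + by move: yu; rewrite yu' eqxx.
  + by move: euy; rewrite e_sym eyu.
- by move=> xt; apply: contra => /eqP <-.
- by move=> /eqP[<-].
Qed.

Lemma T3 (T : finType) (e : rel T) (e_sym : symmetric e) u (s : edgeT e) (p p' : subdiv_vertex e) :
  step (@subdiv_rel T e) p p' -> ~~ blk u p -> u \in val s -> p' != inr s.
Proof.
rewrite /step; case: p => [y|t]; case: p' => [x|s'] /=; rewrite ?orbF //.
- move=> ys; rewrite negb_or => /andP[/negbTE yu /negbTE euy] us.
  apply/eqP => -[ess]; subst s'.
  case: (edge_cases e_sym (valP s) ys us) => [yu'|eyu].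
  + by move: yu; rewrite yu' eqxx.
  + by move: euy; rewrite e_sym eyu.
- move=> /eqP[<-] ut us; apply/eqP => -[ets]; by move: ut; rewrite ets us.
Qed.

Lemma edge_neq (T : finType) (e : rel T) (e_irr : irreflexive e) x y : e x y -> x != y.
Proof. by move=> h; apply/eqP => exy; move: h; rewrite exy e_irr. Qed.

Lemma no_tri (T : finType) (e : rel T) (e_irr : irreflexive e) (G_girth : girth_ge e 5) (v a b : T) :
  e v a -> e a b -> e b v -> False.
Proof.
move=> h1 h2 h3.
have n1 := edge_neq e_irr h1; have n2 := edge_neq e_irr h2.
have n3 : v != b by rewrite eq_sym (edge_neq e_irr h3).
have := G_girth [:: v; a; b].
rewrite /= !inE !negb_or n1 n2 n3 h1 h2 h3 /=.
by move=> /(_ isT isT isT).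
Qed.

Lemma no_sq (T : finType) (e : rel T) (e_irr : irreflexive e) (G_girth : girth_ge e 5) (v a y b : T) :
  e v a -> e a y -> e y b -> e b v -> a != b -> v != y -> False.
Proof.
move=> h1 h2 h3 h4 nab nvy.
have n1 := edge_neq e_irr h1; have n2 := edge_neq e_irr h2; have n3 := edge_neq e_irr h3.
have n4 : v != b by rewrite eq_sym (edge_neq e_irr h4).
have := G_girth [:: v; a; y; b].
rewrite /= !inE !negb_or n1 n2 n3 n4 nab nvy h1 h2 h3 h4 /=.
by move=> /(_ isT isT isT).
Qed.

Lemma blk_uniq (T : finType) (e : rel T) (e_sym : symmetric e) (e_irr : irreflexive e)
  (G_girth : girth_ge e 5) (p : subdiv_vertex e) (v u1 u2 : T) :
  p != inl v -> e v u1 -> e v u2 -> blk u1 p -> blk u2 p -> u1 = u2.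
Proof.
move=> np h1 h2 b1 b2.
case: (eqVneq u1 u2) => // n12; exfalso; move: np b1 b2.
case: p => [y|t] /=.
- move=> nyv.
  have nvy : v != y by apply: contra nyv => /eqP->.
  case/orP => [/eqP ey1 | e1y]; case/orP => [/eqP ey2 | e2y].
  + by move: n12; rewrite -ey1 -ey2 eqxx.
  + apply: (no_tri e_irr G_girth h2 (_ : e u2 u1) (_ : e u1 v));
      [by rewrite -ey1 | by rewrite e_sym].
  + apply: (no_tri e_irr G_girth h1 (_ : e u1 u2) (_ : e u2 v));
      [by rewrite -ey2 | by rewrite e_sym].
  + apply: (no_sq e_irr G_girth h1 e1y (_ : e y u2) (_ : e u2 v) n12 nvy);
    by rewrite e_sym.
- move=> _ i1 i2.
  case: (edge_cases e_sym (valP t) i1 i2) => [eq12|e12].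
  + by move: n12; rewrite eq12 eqxx.
  + by apply: (no_tri e_irr G_girth h1 e12); rewrite e_sym.
Qed.

Definition gb (T : finType) (e : rel T) (v u : T) (c : seq (subdiv_vertex e)) : bool :=
  e v u && ((count (blk u) c == 0) ||
            ((count (blk u) c == 1) && has (fun p => near1 v p && blk u p) c)).

Lemma exists_good (T : finType) (e : rel T) (e_sym : symmetric e) (e_irr : irreflexive e)
  (G_girth : girth_ge e 5) (v : T) (c : seq (subdiv_vertex e)) :
  all (fun p => p != inl v) c -> size c <= deg e v -> has (near1 v) c ->
  exists u, gb v u c.
Proof.
move=> hall hsz /hasP [p0 p0c np0].
case: (pickP (fun u => gb v u c)) => [u hu|Hn]; first by exists u.
exfalso.
have [t ept vt] : exists2 t, p0 = inr t & v \in val t.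
  case: p0 p0c np0 => [y|t] p0c /= np0; last by exists t.
  by move: (allP hall _ p0c); rewrite (eqP np0) eqxx.
have [w [wt evw]] := other_end e_sym (valP t) vt.
have Hw : 2 <= count (blk w) c.
  have hb : has (fun p => near1 v p && blk w p) c.
    by apply/hasP; exists p0 => //; rewrite ept /= vt wt.
  have hpos : 0 < count (blk w) c.
    by rewrite -has_count; apply/hasP; exists p0 => //; rewrite ept /= wt.
  have := Hn w; rewrite /gb evw hb /=.
  by case: (count _ _) hpos => [|[|n]].
have Hu : forall u, e v u -> 1 <= count (blk u) c.
  move=> u evu; have := Hn u; rewrite /gb evu /=.
  by move/negbT/norP => [h _]; rewrite lt0n.
pose N := [set u | e v u].
have E : forall u, count (blk u) c = \sum_(p <- c) (if blk u p then 1 else 0).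
  by move=> u; rewrite -sum1_count big_mkcond.
have Up : \sum_(u in N) count (blk u) c <= size c.
  rewrite (eq_bigr _ (fun u _ => E u)) exchange_big /= -sum1_size !big_seq.
apply: leq_sum => p pc.
  rewrite -big_mkcondr /=.
  case: (pickP [pred u | (u \in N) && blk u p]) => [u0 hu0 | none].
  - rewrite (bigD1 u0) //= big1 // => u /andP[/andP[uN bu] nu].
    exfalso; move: nu; move/andP: hu0 => [u0N bu0].
    rewrite !inE in uN u0N.
    by rewrite (blk_uniq e_sym e_irr G_girth (allP hall _ pc) uN u0N bu bu0) eqxx.
  - by rewrite big1 // => u hu; move: (none u); rewrite /= hu.
have Lo : #|N| + 1 <= \sum_(u in N) count (blk u) c.
  have wN : w \in N by rewrite inE.
  rewrite -sum1_card (bigD1 w) //= [X in _ <= X](bigD1 w) //=.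
  have hab : \sum_(i in N | i != w) 1 <= \sum_(i in N | i != w) count (blk i) c.
    by apply: leq_sum => i /andP[]; rewrite inE => /Hu.
  lia.
have : #|N| = deg e v by [].
move: Up Lo hsz; set S := \sum_(u in N) _.
move=> Up Lo hsz hN.
have := leq_trans Lo (leq_trans Up hsz).
by rewrite -hN addn1 ltnn.
Qed.

Lemma mkE_proof (T : finType) (e : rel T) (v u : T) (h : e v u) : is_edge e [set v; u].
Proof. by apply/existsP; exists v; apply/existsP; exists u; rewrite h eqxx. Qed.

Definition mkE (T : finType) (e : rel T) (v u : T) (h : e v u) : edgeT e :=
  exist _ [set v; u] (mkE_proof h).

Lemma mindeg_le (T : finType) (e : rel T) (v : T) : mindeg e <= deg e v.
Proof.
rewrite /mindeg; elim: (index_enum T) (mem_index_enum v) => // x s IHs.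
rewrite big_cons inE => /orP[/eqP<-|/IHs h]; first exact: geq_minl.
exact: leq_trans (geq_minr _ _) h.
Qed.

Definition Safe (T : finType) (e : rel T) (c : seq (subdiv_vertex e)) (r : subdiv_vertex e) : Prop :=
  size c <= mindeg e /\
  ((exists v, r = inl v /\ all (fun p => ~~ near1 v p) c) \/
   (exists (s : edgeT e) u, r = inr s /\ u \in val s /\ all (fun p => ~~ blk u p) c)).

Lemma no_win (T : finType) (e : rel T) (e_sym : symmetric e) (e_irr : irreflexive e)
  (G_girth : girth_ge e 5) :
  forall c r, cops_force (@subdiv_rel T e) c r -> Safe c r -> False.
Proof.
fix IH 3.
move=> c0 r0 [] c c' r Hst Hor [Hsz Hcase].
have Hsz' : size c' <= mindeg e by rewrite (all2_size Hst).
case: Hcase => [[v [Er Hv]] | [s [u [Er [us Hu]]]]]; subst r.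
- have Hc' : all (fun p => p != inl v) c' :=
    all2_transfer Hst (fun p p' hs hp => T1 hs hp) Hv.
  have Hnotin : inl v \notin c'.
    by apply/negP => /(allP Hc'); rewrite eqxx.
  case: Hor => [hin|Hf]; first by rewrite hin in Hnotin.
  case: (boolP (has (near1 v) c')) => hA.
  + have [u /andP [evu hg]] :=
      exists_good e_sym e_irr G_girth Hc' (leq_trans Hsz' (mindeg_le e v)) hA.
    case/orP: hg => [/eqP h0 | /andP [/eqP h1 /hasP [p pc /andP [np bp]]]].
    * pose s := mkE evu.
      have us : u \in val s by rewrite /= !inE eqxx orbT.
      have Hall : all (fun p => ~~ blk u p) c'.
        apply/allP => p pc; apply/negP => bp.
        have : has (blk u) c' by apply/hasP; exists p.
        by rewrite has_count h0.
      have sn : inr s \notin c'.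
        by apply/negP => /(allP Hall) /=; rewrite us.
      apply: (IH _ _ (Hf (inr s) _)).
        by rewrite /step /= !inE eqxx.
      rewrite (rem_id sn); split => //; right; exists s, u; split => //.
    * have [t Ept vt] : exists2 t, p = inr t & v \in val t.
        case: p pc np bp => [y|t] pc /= np bp; last by exists t.
        by move: (allP Hc' _ pc); rewrite (eqP np) eqxx.
      subst p.
      apply: (IH _ _ (Hf (inr t) _)).
        by rewrite /step /= ?vt ?orbT.
      split; first by rewrite size_rem // (leq_trans (leq_pred _)).
      right; exists t, u; split => //; split => //.
      apply/allP => q qc; apply/negP => bq.
      have : has (blk u) (rem (inr t) c') by apply/hasP; exists q.
      by rewrite has_count count_rem h1 pc bp.
  + apply: (IH _ _ (Hf (inl v) _)).
      by rewrite /step eqxx.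
    rewrite (rem_id Hnotin); split => //; left; exists v; split => //.
    apply/allP => p pc; apply/negP => np.
    by move: hA; apply/negP/negPn/hasP; exists p.
- have Hc1 : all (fun p => p != inr s) c' :=
    all2_transfer Hst (fun p p' hs hp => T3 e_sym hs hp us) Hu.
  have Hc2 : all (fun p => ~~ near1 u p) c' :=
    all2_transfer Hst (fun p p' hs hp => T2 e_sym hs hp) Hu.
  have Hnotin : inr s \notin c'.
    by apply/negP => /(allP Hc1); rewrite eqxx.
  case: Hor => [hin|Hf]; first by rewrite hin in Hnotin.
  have un : inl u \notin c'.
    by apply/negP => /(allP Hc2) /=; rewrite eqxx.
  apply: (IH _ _ (Hf (inl u) _)).
    by rewrite /step /= ?us ?orbT.
  rewrite (rem_id un); split => //; left; exists u; split => //.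
Qed.

Lemma domnum_le (T : finType) (e : rel T) (D : {set T}) :
  dominating e D -> domnum e <= #|D|.
Proof.
move=> hD; rewrite /domnum; elim: (index_enum _) (mem_index_enum D) => // x s IHs.
rewrite big_cons inE => /orP[/eqP<-|/IHs h]; first by rewrite hD geq_minl.
by case: ifP => _ //; exact: leq_trans (geq_minr _ _) h.
Qed.

Theorem lemma3 (T : finType) (e : rel T)
  (e_sym : symmetric e) (e_irr : irreflexive e)
  (G_conn : connected_graph e) (G_girth : girth_ge e 5)
  (G_dom : mindeg e < domnum e) :
  forall k : nat, cops_win (@subdiv_rel T e) k -> mindeg e + 1 <= k.
Proof.
move=> k [c [Hk Hc]].
case: (leqP (mindeg e + 1) k) => // Hlt; exfalso.
have Hsz : size c <= mindeg e by rewrite Hk; move: Hlt; rewrite addn1 ltnS.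
have : ~~ dominating e set0.
  apply/negP => /domnum_le; rewrite cards0 leqn0 => /eqP h0.
  by move: G_dom; rewrite h0.
move/forallPn => [x0 _].
pose proj (p : subdiv_vertex e) : T :=
  match p with inl y => y | inr t => odflt x0 [pick x in val t] end.
pose D := [set x in map proj c].
have cD : #|D| <= size c.
  by rewrite cardsE; apply: leq_trans (card_size _) _; rewrite size_map.
have nD : ~~ dominating e D.
  apply/negP => /domnum_le h.
  have := leq_trans G_dom (leq_trans h (leq_trans cD Hsz)).
  by rewrite ltnn.
move/forallPn: nD => [v]; rewrite negb_or => /andP[vD /existsPn nvD].
have Hall : all (fun p => ~~ near1 v p) c.
  apply/allP => p pc.
  have pD : proj p \in D by rewrite inE map_f.
  case: p pc pD => [y|t] pc /= pD.
  - by apply: contra vD => /eqP <-.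
  - apply/negP => vt.
    case: pickP pD => [a /= at'|none] /= pD; last by move: (none v); rewrite /= vt.
    case: (edge_cases e_sym (valP t) at' vt) => [eav|eav].
    + by move: vD; rewrite -eav pD.
    + by move: (nvD a); rewrite pD e_sym eav.
apply: (no_win e_sym e_irr G_girth (Hc (inl v))).
split => //; left; exists v; split => //.
Qed.
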